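(* Define $A_{2}=\frac{1}{\sqrt2}\begin{bmatrix}1&1\\1&-1\end{bmatrix}$ and, for $k\ge1$, $A_{2^{k+1}}=\frac{1}{\sqrt{\beta(A_{2^k})^2+1}}\begin{bmatrix}\beta(A_{2^k})A_{2^k} & I_{2^k}\\ \beta(A_{2^k})A_{2^k} & -I_{2^k}\end{bmatrix}$. Then for every $k\ge1$, $A_{2^k}$ is a $2^k\times 2^k$ matrix with rows of Euclidean norm $1$ and $$\beta(A_{2^k})=\sqrt{k+1}=\sqrt{\log_2(n)+1},\quad n=2^k.$$
   Context: For $A\in\mathbb{R}^{m\times n}$, $\beta(A)=\frac{1}{2^n}\sum_{x\in\{-1,1\}^n}\|Ax\|_\infty$. $I_N$ is the $N\times N$ identity matrix. *)

(* Defs.v *)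
From HB Require Import structures.
From mathcomp Require Import all_boot all_order all_algebra.
From mathcomp Require Import reals.
Set Implicit Arguments. Unset Strict Implicit. Unset Printing Implicit Defensive.
Import Order.TTheory GRing.Theory Num.Theory.
Local Open Scope ring_scope.

Section Defs.
Variable R : realType.

(* sign vectors x in {-1,1}^n are encoded by x : {ffun 'I_n -> bool} *)
Definition sgn_of (b : bool) : R := if b then 1 else -1.

Definition infnorm m (y : 'I_m -> R) : R := \big[Num.max/0]_(i < m) `|y i|.

Definition beta m n (A : 'M[R]_(m, n)) : R :=
  (2%:R ^+ n)^-1 *
  \sum_(x : {ffun 'I_n -> bool})
     infnorm (fun i : 'I_m => \sum_(j < n) A i j * sgn_of (x j)).

Lemma pow2S k : (2 ^ k.+1 + 2 ^ k.+1 = 2 ^ k.+2)%N.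
Proof. by rewrite [(2 ^ k.+2)%N]expnS mul2n addnn. Qed.

(* Asucc k = A_{2^(k+1)}, defined by the recursion of the paper. *)
Fixpoint Asucc (k : nat) : 'M[R]_(2 ^ k.+1) :=
  match k return 'M[R]_(2 ^ k.+1) with
  | 0 => (Num.sqrt 2%:R)^-1 *:
           \matrix_(i < 2 ^ 1, j < 2 ^ 1)
              (if ((i : nat) == 1%N) && ((j : nat) == 1%N) then -1 else 1)
  | k'.+1 =>
      let B := Asucc k' in
      let b := beta B in
      (Num.sqrt (b ^+ 2 + 1))^-1 *:
        castmx (pow2S k', pow2S k')
          (block_mx (b *: B) 1%:M (b *: B) (- 1%:M))
  end.

(* Apow k = A_{2^k} for k >= 1 (Apow 0 is an irrelevant placeholder). *)
Definition Apow (k : nat) : 'M[R]_(2 ^ k) :=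
  match k return 'M[R]_(2 ^ k) with
  | 0 => 1%:M
  | k'.+1 => Asucc k'
  end.

End Defs.

(* Main.v *)
Require Import Defs.
From HB Require Import structures.
From mathcomp Require Import all_boot all_order all_algebra.
From mathcomp Require Import reals.
From mathcomp Require Import ring lra.
Import Order.TTheory GRing.Theory Num.Theory.
Local Open Scope ring_scope.

Lemma infnorm_ge0 (R : realType) m (v : 'I_m -> R) : 0 <= infnorm v.
Proof. rewrite /infnorm; apply: (big_ind (fun x : R => 0 <= x)) => //= x y hx _; by rewrite le_max hx. Qed.

Lemma infnorm_scale (R : realType) m (c : R) (v : 'I_m -> R) : 0 <= c ->
  infnorm (fun i => c * v i) = c * infnorm v.
Proof.
move=> hc; rewrite /infnorm.
rewrite (big_morph (fun x => c * x) (fun a b => maxr_pMr a b hc) (mulr0 c)).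
by apply: eq_bigr => i _; rewrite normrM (ger0_norm hc).
Qed.

Lemma beta_cast (R : realType) m m' n n' (em : m = m') (en : n = n')
  (A : 'M[R]_(m, n)) : beta (castmx (em, en) A) = beta A.
Proof. by case: m' / em; case: n' / en; rewrite castmx_id. Qed.

Lemma beta_scale (R : realType) m n (c : R) (A : 'M[R]_(m, n)) : 0 <= c ->
  beta (c *: A) = c * beta A.
Proof.
move=> hc; rewrite /beta [RHS]mulrCA; congr (_ * _); rewrite mulr_sumr.
apply: eq_bigr => x _; rewrite -infnorm_scale // /infnorm.
apply: eq_bigr => i _; congr (`|_|); rewrite mulr_sumr; apply: eq_bigr => j _.
by rewrite mxE mulrA.
Qed.

Lemma beta_ge0 (R : realType) m n (A : 'M[R]_(m, n)) : 0 <= beta A.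
Proof.
rewrite /beta mulr_ge0 ?invr_ge0 ?exprn_ge0 ?ler0n //.
by apply: sumr_ge0 => x _; apply: infnorm_ge0.
Qed.

Lemma rows_cast (R : realType) m m' n n' (em : m = m') (en : n = n')
  (A : 'M[R]_(m, n)) r : (forall i, \sum_(j < n) (A i j) ^+ 2 = r) ->
  forall i, \sum_(j < n') (castmx (em, en) A i j) ^+ 2 = r.
Proof. by case: m' / em; case: n' / en; rewrite castmx_id. Qed.

Definition glue N (y z : {ffun 'I_N -> bool}) : {ffun 'I_(N + N) -> bool} :=
  [ffun i => match split i with inl a => y a | inr b => z b end].
Arguments glue {N} y z.

Lemma glueL N y z (j : 'I_N) : glue y z (lshift N j) = y j.
Proof. by rewrite /glue ffunE (unsplitK (inl _ j)). Qed.

Lemma glueR N y z (j : 'I_N) : glue y z (rshift N j) = z j.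
Proof. by rewrite /glue ffunE (unsplitK (inr _ j)). Qed.

Lemma sum_ffun_split (R : realType) N (F : {ffun 'I_(N + N) -> bool} -> R) :
  \sum_x F x = \sum_(y : {ffun 'I_N -> bool}) \sum_(z : {ffun 'I_N -> bool}) F (glue y z).
Proof.
rewrite pair_big /=.
rewrite (reindex (fun p : {ffun 'I_N -> bool} * {ffun 'I_N -> bool} => glue p.1 p.2)) //.
exists (fun x : {ffun 'I_(N + N) -> bool} =>
  ([ffun a => x (lshift N a)] : {ffun 'I_N -> bool}, [ffun b => x (rshift N b)] : {ffun 'I_N -> bool})).
  move=> [y z] _ /=; congr pair; apply/ffunP => a; rewrite ffunE.
    by rewrite glueL.
  by rewrite glueR.
move=> x _; apply/ffunP => i; rewrite /glue ffunE /=.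
by case: splitP => j hj; rewrite ffunE; congr (x _); apply: val_inj.
Qed.

Lemma maxabs (R : realType) (a : R) (s : bool) :
  Num.max `|a + sgn_of R s| `|a - sgn_of R s| = `|a| + 1.
Proof.
have H : Num.max `|a + 1| `|a - 1| = `|a| + 1.
  case: (leP 0 a) => ha.
    rewrite (ger0_norm ha) (ger0_norm (_ : 0 <= a + 1)); last by lra.
    by apply: max_l; rewrite ler_norml; apply/andP; split; lra.
  rewrite (ltr0_norm ha) (ler0_norm (_ : a - 1 <= 0)); last by lra.
  rewrite maxC max_l; first by lra.
  rewrite ler_norml; apply/andP; split; lra.
case: s; rewrite /sgn_of //.
by rewrite opprK maxC.
Qed.

Lemma beta_block (R : realType) N (B : 'M[R]_N) (b : R) : (0 < N)%N -> 0 <= b ->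
  beta (block_mx (b *: B) 1%:M (b *: B) (- 1%:M)) = b * beta B + 1.
Proof.
move=> hN hb.
rewrite /beta sum_ffun_split.
set M := block_mx _ _ _ _.
have key : forall y z : {ffun 'I_N -> bool},
  infnorm (fun i => \sum_(j < N + N) M i j * sgn_of R (glue y z j)) =
  b * infnorm (fun i => \sum_(j < N) B i j * sgn_of R (y j)) + 1.
  move=> y z.
  set u := fun i => \sum_(j < N) B i j * sgn_of R (y j).
  have hd : forall i : 'I_N, \sum_(j < N) (1%:M : 'M[R]_N) i j * sgn_of R (z j) = sgn_of R (z i).
    move=> i; rewrite (bigD1 i) //= big1 ?addr0.
      by rewrite mxE eqxx mul1r.
    by move=> j /negbTE hj; rewrite mxE eq_sym hj mul0r.
  have hL : forall i, \sum_(j < N + N) M (lshift N i) j * sgn_of R (glue y z j) = b * u i + sgn_of R (z i).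
    move=> i; rewrite big_split_ord /=; congr (_ + _).
      rewrite /u mulr_sumr; apply: eq_bigr => j _.
      by rewrite /M block_mxEul glueL mxE mulrA.
    rewrite -hd; apply: eq_bigr => j _.
    by rewrite /M block_mxEur glueR.
  have hR : forall i, \sum_(j < N + N) M (rshift N i) j * sgn_of R (glue y z j) = b * u i - sgn_of R (z i).
    move=> i; rewrite big_split_ord /=; congr (_ + _).
      rewrite /u mulr_sumr; apply: eq_bigr => j _.
      by rewrite /M block_mxEdl glueL mxE mulrA.
    rewrite -hd -sumrN; apply: eq_bigr => j _.
    by rewrite /M block_mxEdr glueR mxE mulNr.
  have hsg : forall s, `|sgn_of R s| = 1 by case; rewrite /sgn_of ?normrN normr1.
  apply: le_anti; apply/andP; split.
    apply/bigmax_leP; split.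
      by rewrite addr_ge0 // mulr_ge0 // infnorm_ge0.
    move=> i _; case: (splitP i) => j hj.
      have -> : i = lshift N j by apply: val_inj.
      rewrite hL; apply: le_trans (ler_normD _ _) _.
      rewrite normrM (ger0_norm hb) hsg lerD2r ler_wpM2l //.
      exact: (le_bigmax 0 (fun i => `|u i|) j).
    have -> : i = rshift N j by apply: val_inj.
    rewrite hR; apply: le_trans (ler_normB _ _) _.
    rewrite normrM (ger0_norm hb) hsg lerD2r ler_wpM2l //.
    exact: (le_bigmax 0 (fun i => `|u i|) j).
  have [j0 _ hj0] := eq_bigmax (x := 0) (Ordinal hN) xpredT (fun i => `|u i|) isT (fun i _ => normr_ge0 _).
  rewrite /infnorm hj0.
  have h1 := le_bigmax 0 (fun i => `|\sum_(j < N + N) M i j * sgn_of R (glue y z j)|) (lshift N j0).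
  have h2 := le_bigmax 0 (fun i => `|\sum_(j < N + N) M i j * sgn_of R (glue y z j)|) (rshift N j0).
  rewrite /= hL in h1; rewrite /= hR in h2.
  have -> : b * `|u j0| = `|b * u j0| by rewrite normrM ger0_norm.
  by rewrite -(maxabs _ _ (z j0)) ge_max h1 h2.
under eq_bigr => y _ do under eq_bigr => z _ do rewrite key.
under eq_bigr => y _ do rewrite sumr_const card_ffun card_bool card_ord -mulr_natr.
rewrite -mulr_suml big_split /= -mulr_sumr sumr_const card_ffun card_bool card_ord.
set S := \sum_y _.
rewrite -mulr_natr mul1r natrX exprD.
have h2 : (2%:R : R) ^+ N != 0 by rewrite expf_neq0 // pnatr_eq0.
field.
exact: h2.
Qed.

Lemma rows_block (R : realType) N (B : 'M[R]_N) (b : R) :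
  (forall i, \sum_(j < N) (B i j) ^+ 2 = 1) ->
  forall i, \sum_(j < N + N) (block_mx (b *: B) 1%:M (b *: B) (- 1%:M) i j) ^+ 2 = b ^+ 2 + 1.
Proof.
move=> hB i.
have hd : forall k : 'I_N, \sum_(j < N) ((1%:M : 'M[R]_N) k j) ^+ 2 = 1.
  move=> k; rewrite (bigD1 k) //= big1 ?addr0.
    by rewrite mxE eqxx expr1n.
  by move=> j /negbTE hj; rewrite mxE eq_sym hj expr0n.
have hb : forall k : 'I_N, \sum_(j < N) ((b *: B) k j) ^+ 2 = b ^+ 2.
  move=> k; under eq_bigr => j _ do rewrite mxE exprMn.
  by rewrite -mulr_sumr hB mulr1.
rewrite big_split_ord /=; case: (splitP i) => k hk.
  have -> : i = lshift N k by apply: val_inj.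
  transitivity (\sum_(j<N) ((b *: B) k j) ^+ 2 + \sum_(j<N) ((1%:M : 'M[R]_N) k j) ^+ 2); last by rewrite hb hd.
congr (_ + _); apply: eq_bigr => j _.
    by rewrite block_mxEul.
  by rewrite block_mxEur.
have -> : i = rshift N k by apply: val_inj.
transitivity (\sum_(j<N) ((b *: B) k j) ^+ 2 + \sum_(j<N) ((1%:M : 'M[R]_N) k j) ^+ 2); last by rewrite hb hd.
congr (_ + _); apply: eq_bigr => j _.
  by rewrite block_mxEdl.
by rewrite block_mxEdr mxE sqrrN.
Qed.

Lemma base_rows (R : realType) : forall i, \sum_(j < 2 ^ 1) (Asucc R 0 i j) ^+ 2 = 1.
Proof.
move=> i.
have e : forall j, (Asucc R 0 i j) ^+ 2 = (Num.sqrt (2%:R : R))^-1 ^+ 2.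
  by move=> j; rewrite /= !mxE exprMn; case: ifP => _; rewrite ?sqrrN expr1n mulr1.
rewrite (eq_bigr _ (fun j _ => e j)) sumr_const card_ord exprVn sqr_sqrtr ?ler0n //.
by rewrite expn1 mulr2n; field.
Qed.

Lemma base_beta (R : realType) : beta (Asucc R 0) = Num.sqrt (1%:R + 1).
Proof.
rewrite /= beta_scale ?invr_ge0 ?sqrtr_ge0 //.
rewrite /beta.
set A := (\matrix_(_, _) _).
have e : forall x : {ffun 'I_(2 ^ 1) -> bool},
  infnorm (fun i : 'I_(2 ^ 1) => \sum_(j < (2 ^ 1)%N) A i j * sgn_of R (x j)) = 2.
  move=> x; rewrite /infnorm big_ord_recl big_ord_recl big_ord0 !big_ord_recl !big_ord0 /A !mxE /=.
  have n2 : `|1 + 1 : R| = 2 by rewrite ger0_norm; lra.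
  rewrite /sgn_of; case: (x ord0); case: (x (lift ord0 ord0));
    rewrite ?addr0 ?mul1r ?mulN1r ?opprK ?subrr ?addNr ?normr0 -?opprD ?normrN;
    rewrite n2 ?maxxx [Num.max 2 0]max_l ?ler0n // ?[Num.max 0 2]max_r ?ler0n //.
rewrite (eq_bigr _ (fun x _ => e x)) sumr_const card_ffun card_bool card_ord expn1.
have -> : (1 + 1 : R) = 2 by [].
have hs0 : Num.sqrt (2 : R) != 0 by rewrite sqrtr_eq0 -ltNge ltr0n.
apply: (mulfI hs0); rewrite mulrA mulfV // mul1r -expr2 sqr_sqrtr ?ler0n //.
by rewrite -mulr_natr; field.
Qed.

Lemma sqrt_div (R : realType) (Y : R) : 0 < Y -> (Num.sqrt Y)^-1 * Y = Num.sqrt Y.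
Proof.
move=> hY; rewrite -{2}(sqr_sqrtr (ltW hY)) expr2 mulKf //.
by rewrite gt_eqF // sqrtr_gt0.
Qed.

Arguments rows_cast {R m m' n n'} em en {A r}.
Arguments rows_block {R N B} b.

Lemma main (R : realType) (k : nat) :
  (forall i, \sum_(j < 2 ^ k.+1) (Asucc R k i j) ^+ 2 = 1) /\
  beta (Asucc R k) = Num.sqrt (k.+1%:R + 1).
Proof.
elim: k => [|k [IHr IHb]].
  by split; [exact: base_rows | exact: base_beta].
set b := beta (Asucc R k).
have hb0 : 0 <= b by apply: beta_ge0.
have hb2 : b ^+ 2 = k.+1%:R + 1 by rewrite /b IHb sqr_sqrtr // addr_ge0 ?ler0n.
have hY : 0 < b ^+ 2 + 1 by rewrite hb2; have := ler0n R k.+1; lra.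
have hs : 0 < Num.sqrt (b ^+ 2 + 1) by rewrite sqrtr_gt0.
have hs0 : Num.sqrt (b ^+ 2 + 1) != 0 by rewrite gt_eqF.
have hN : (0 < 2 ^ k.+1)%N by rewrite expn_gt0.
split.
  move=> i /=; rewrite -/b.
  under eq_bigr => j _ do rewrite mxE exprMn.
  rewrite -mulr_sumr (rows_cast (pow2S k) (pow2S k) (rows_block b IHr)).
  by rewrite exprVn sqr_sqrtr ?ltW // mulVf // gt_eqF.
rewrite /= -/b beta_scale ?invr_ge0 ?ltW // beta_cast beta_block // -expr2.
rewrite sqrt_div // hb2.
by rewrite [in RHS]mulrSr.
Qed.

Theorem corollary4 (R : realType) (k : nat) (hk : (1 <= k)%N) :
  (forall i : 'I_(2 ^ k),
      Num.sqrt (\sum_(j < 2 ^ k) (Apow R k i j) ^+ 2) = 1) /\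
  beta (Apow R k) = Num.sqrt (k%:R + 1).
Proof.
case: k hk => [//|k] _ /=.
have [hr hb] := main R k.
by split => [i|]; rewrite ?hr ?sqrtr1.
Qed.
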